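(* Let $\alpha\in\mathbb{R}$, let $\mathbb{Q}[x]^+_{x=\alpha}=\{p\in\mathbb{Q}[x]: p(\alpha)>0\}$, and suppose $\mathbb{Q}[x]^+_{x=\alpha}=H_1\sqcup H_2$ with $H_1,H_2$ disjoint nonempty subsets, each closed under addition and multiplication. Then: (i) for every integer $i\ge 2$, at least one of $H_1,H_2$ contains both a polynomial of degree $i$ with positive leading coefficient and a polynomial of degree $i$ with negative leading coefficient; (ii) for every integer $N\ge1$ and $j=1,2$, $H_j$ contains a polynomial of degree exactly $N$. *)

(* Defs.v *)
From HB Require Import structures.
From mathcomp Require Import all_boot all_order all_algebra.
From mathcomp Require Import reals.
Set Implicit Arguments. Unset Strict Implicit. Unset Printing Implicit Defensive.
Import Order.TTheory GRing.Theory Num.Theory.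
Local Open Scope ring_scope.

Definition pos_at (R : realType) (alpha : R) (p : {poly rat}) : Prop :=
  0 < (map_poly (ratr : rat -> R) p).[alpha].

Definition add_mul_closed (H : {poly rat} -> Prop) : Prop :=
  (forall p q, H p -> H q -> H (p + q)) /\ (forall p q, H p -> H q -> H (p * q)).

(* Main.v *)
Require Import Defs.
From HB Require Import structures.
From mathcomp Require Import all_boot all_order all_algebra.
From mathcomp Require Import reals.
From mathcomp Require Import lra ring.
From Stdlib Require Import Classical.
Import Order.TTheory GRing.Theory Num.Theory.
Local Open Scope ring_scope.

Section Aux.
Variables (R : realType) (alpha : R).

Definition ev (p : {poly rat}) : R := (map_poly (ratr : rat -> R) p).[alpha].

Lemma evD p q : ev (p + q) = ev p + ev q.
Proof. by rewrite /ev rmorphD hornerD. Qed.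
Lemma evM p q : ev (p * q) = ev p * ev q.
Proof. by rewrite /ev rmorphM hornerM. Qed.
Lemma evB p q : ev (p - q) = ev p - ev q.
Proof. by rewrite /ev rmorphB hornerD hornerN. Qed.
Lemma evC c : ev c%:P = ratr c.
Proof. by rewrite /ev map_polyC hornerC. Qed.
Lemma evX : ev 'X = alpha.
Proof. by rewrite /ev map_polyX hornerX. Qed.
Lemma evXn p k : ev (p ^+ k) = ev p ^+ k.
Proof. by rewrite /ev rmorphXn horner_exp. Qed.

Lemma dens (e : R) : 0 < e -> exists r s : rat,
  [/\ ratr r < alpha, alpha < ratr s & ratr s - ratr r < e].
Proof.
move=> e0.
have [r] := @rat_in_itvoo R (alpha - e / 2) alpha ltac:(lra).
have [s] := @rat_in_itvoo R alpha (alpha + e / 2) ltac:(lra).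
rewrite !in_itv /= => /andP[h1 h2] /andP[h3 h4].
exists r, s; split; lra.
Qed.

Lemma small_bound (F b e K Y : R) : 0 < F -> 0 < b -> e * (F + b + 1) = F ->
  0 <= K -> K <= 1 -> 0 < Y -> Y < e -> b * K * Y < F.
Proof.
move=> F0 b0 he K0 K1 Y0 Ye.
have h1 : K * Y <= Y by nra.
have h2 : b * (K * Y) <= b * Y by nra.
have h3 : b * Y < b * e by nra.
have h4 : 0 < e by nra.
nra.
Qed.

Variables (A B : {poly rat} -> Prop).
Hypothesis hAB : forall p, pos_at alpha p <-> (A p \/ B p).
Hypothesis hdisj : forall p, ~ (A p /\ B p).
Hypothesis clA : add_mul_closed A.
Hypothesis clB : add_mul_closed B.

Lemma posB p : B p -> 0 < ev p.
Proof. by move=> h; apply/(proj2 (hAB p)); right. Qed.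
Lemma posA p : A p -> 0 < ev p.
Proof. by move=> h; apply/(proj2 (hAB p)); left. Qed.

Lemma sub_other f g : B f -> A g -> 0 < ev (f - g) -> B (f - g).
Proof.
move=> Bf Ag h; have [Afg|//] := proj1 (hAB _) h.
exfalso; apply: (hdisj f); split => //.
have -> : f = (f - g) + g by rewrite subrK.
exact: clA.1.
Qed.

Lemma powA l k : A l -> A (l ^+ k.+1).
Proof.
move=> Al; elim: k => [|k IH]; first by rewrite expr1.
by rewrite exprS; apply: clA.2.
Qed.

Lemma mulpowA q l k : A q -> A l -> A (q * l ^+ k).
Proof.
move=> Aq Al; elim: k => [|k IH]; first by rewrite expr0 mulr1.
by rewrite exprSr mulrA; apply: clA.2.
Qed.

Lemma lenXsubC r : size ('X - r%:P : {poly rat}) = 2%N.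
Proof. exact: size_XsubC. Qed.
Lemma lenCsubX s : size (s%:P - 'X : {poly rat}) = 2%N.
Proof. by rewrite -opprB size_polyN size_XsubC. Qed.

Lemma has_lin : (exists p, B p) -> exists l, B l /\ size l = 2%N.
Proof.
move=> [f0 Bf0].
case: (classic (exists l, B l /\ size l = 2%N)) => // Hno; exfalso.
have linA : forall l : {poly rat}, size l = 2%N -> 0 < ev l -> A l.
  move=> l hl el; have [//|Bl] := proj1 (hAB l) el.
  by exfalso; apply: Hno; exists l.
have cstA : forall c : rat, 0 < c -> A c%:P.
  move=> c c0.
  have [r [s [h1 h2 h3]]] := dens (ratr c) ltac:(by rewrite ltr0q).
  have -> : c%:P = ('X - r%:P) + ((r + c)%:P - 'X) by rewrite polyCD; ring.
  apply: clA.1; apply: linA.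
  - exact: lenXsubC.
  - by rewrite evB evX evC; lra.
  - exact: lenCsubX.
  - by rewrite evB evX evC rmorphD /=; lra.
suff: forall n (f : {poly rat}), (size f <= n)%N -> B f -> False.
  by move=> H; exact: (H _ f0 (leqnn _) Bf0).
elim=> [|n IH] f hs Bf.
  by move: (posB _ Bf); move: hs; rewrite leqn0 size_poly_eq0 => /eqP ->; rewrite /ev rmorph0 horner0 ltxx.

have ef := posB _ Bf.
case Hs: (size f) => [|[|k]].
- by move/eqP: Hs; rewrite size_poly_eq0 => /eqP Hf; move: ef; rewrite Hf /ev rmorph0 horner0 ltxx.
- have := size1_polyC (eq_leq Hs) => Hf.
  apply: (hdisj f); split => //; rewrite Hf; apply: cstA.
  by rewrite -(ltr0q R) -evC -Hf.
set a := lead_coef f.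
have a0 : a != 0 by rewrite lead_coef_eq0 -size_poly_eq0 Hs.
set F := ev f.
have F0 : 0 < F := ef.
set b := `|ratr a : R|.
have b0 : 0 < b by rewrite normr_gt0 fmorph_eq0.
set e := F / (F + b + 1).
have he : e * (F + b + 1) = F by rewrite /e divfK //; apply: lt0r_neq0; lra.
have e0 : 0 < e by rewrite /e divr_gt0 //; lra.
have e1 : e <= 1 by rewrite /e ler_pdivrMr; lra.
have [r [s [h1 h2 h3]]] := dens e e0.
set u := ('X - r%:P : {poly rat}).
have Au : A u by apply: linA; [exact: lenXsubC| rewrite /u evB evX evC; lra].
have Kb : 0 <= (alpha - ratr r) ^+ k <= 1.
  by rewrite exprn_ge0 ?exprn_ile1 //; lra.
have [g [Ag lg sg eg]] : exists g, [/\ A g, lead_coef g = a, size g = k.+2 &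
    ev g < F].
  have key : forall t, lead_coef (a%:P * u ^+ k * ('X - t%:P)) = a /\
      size (a%:P * u ^+ k * ('X - t%:P)) = k.+2.
    move=> t; rewrite -mulrA lead_coefM lead_coefC lead_coefM lead_coef_exp.
    rewrite !lead_coefXsubC expr1n !mulr1; split => //.
    rewrite size_Cmul // size_mul ?size_exp_XsubC ?size_XsubC ?addn2 //.
      by rewrite -size_poly_eq0 size_exp_XsubC.
    by rewrite -size_poly_eq0 size_XsubC.
  case: (ltrgt0P a) => [ap|an|az]; last by move: a0; rewrite az eqxx.
  - exists (a%:P * u ^+ k * ('X - r%:P)); have [k1 k2] := key r; split => //.
      apply: clA.2; [apply: mulpowA => //; exact: cstA| exact: Au].
    rewrite !evM evXn !evB !evX !evC.
    have -> : ratr a = b by rewrite /b ger0_norm // ler0q ltW.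
    case/andP: Kb => K0 K1; apply: (small_bound _ _ _ _ _ F0 b0 he K0 K1); lra.
  - exists (a%:P * u ^+ k * ('X - s%:P)); have [k1 k2] := key s; split => //.
      have -> : a%:P * u ^+ k * ('X - s%:P) = (- a)%:P * u ^+ k * (s%:P - 'X).
        by rewrite polyCN; ring.
      apply: clA.2; [apply: mulpowA => //; apply: cstA; rewrite oppr_gt0 //|].
      by apply: linA; [exact: lenCsubX| rewrite evB evX evC; lra].
    rewrite !evM evXn !evB !evX !evC.
    have -> : ratr a * (alpha - ratr r) ^+ k * (alpha - ratr s) =
              b * (alpha - ratr r) ^+ k * (ratr s - alpha).
      by rewrite /b ltr0_norm ?ltrq0 //; ring.
    case/andP: Kb => K0 K1; apply: (small_bound _ _ _ _ _ F0 b0 he K0 K1); lra.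
have Bfg : B (f - g).
  by apply: sub_other => //; rewrite evB -/F; lra.
suff hsz : (size (f - g)%R <= n)%N by exact: (IH _ hsz Bfg).
have : (size (f - g)%R <= k.+1)%N.
  apply/leq_sizeP => j hj; rewrite coefB.
  case: (ltngtP j k.+1) => [hjl|hjg|->].
  - by move: hj; rewrite leqNgt hjl.
  - have /leq_sizeP Hf := eq_leq Hs; have /leq_sizeP Hg := eq_leq sg.
    by rewrite Hf // Hg // subrr.
  - have : lead_coef f = f`_k.+1 by rewrite lead_coefE Hs.
    have : lead_coef g = g`_k.+1 by rewrite lead_coefE sg.
    by move=> <- <-; rewrite lg subrr.
move=> H; apply: leq_trans H _; by rewrite -ltnS -Hs.
Qed.

Lemma size_pow (l : {poly rat}) m : size l = 2%N -> size (l ^+ m) = m.+1.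
Proof.
move=> sl; have := size_exp l m; rewrite sl mul1n.
have : l ^+ m != 0 by rewrite expf_neq0 // -size_poly_eq0 sl.
rewrite -size_poly_eq0; case: (size (l ^+ m)) => // t _ /= ->. by [].
Qed.

Lemma powB l k : B l -> B (l ^+ k.+1).
Proof.
move=> Bl; elim: k => [|k IH]; first by rewrite expr1.
by rewrite exprS; apply: clB.2.
Qed.

Lemma deg_N : (exists p, B p) -> forall N, (1 <= N)%N ->
  exists p, B p /\ size p = N.+1.
Proof.
move=> hB [|N] // _; have [l [Bl sl]] := has_lin hB.
by exists (l ^+ N.+1); split; [exact: powB| exact: size_pow].
Qed.

Lemma part_i (q l : {poly rat}) : A q -> A l -> size l = 2%N ->
  lead_coef l ^+ 2 = 1 -> size q = 3%N -> lead_coef q = -1 ->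
  forall i, (2 <= i)%N -> exists p q', [/\ A p, A q',
     size p = i.+1 /\ size q' = i.+1, 0 < lead_coef p & lead_coef q' < 0].
Proof.
move=> Aq Al sl ll sq lq [|[|k]] // _.
have AP : A (l ^+ k.+2) by exact: powA.
have AQ : A (q * l ^+ k) by exact: mulpowA.
have sP : size (l ^+ k.+2) = k.+3 by exact: size_pow.
have sQ : size (q * l ^+ k) = k.+3.
  rewrite size_mul ?sq ?size_pow //; first by rewrite -size_poly_eq0 sq.
  by rewrite -size_poly_eq0 size_pow.
have lP : lead_coef (l ^+ k.+2) = lead_coef l ^+ k.
  by rewrite lead_coef_exp -addn2 exprD ll mulr1.
have lQ : lead_coef (q * l ^+ k) = - lead_coef l ^+ k.
  by rewrite lead_coefM lq lead_coef_exp mulN1r.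
have c0 : lead_coef l ^+ k != 0.
  apply: expf_neq0; apply/eqP => h; move: ll; rewrite h expr0n /= => /eqP.
  by rewrite eq_sym oner_eq0.
case: (ltrgt0P (lead_coef l ^+ k)) => [cp|cn|cz]; last by move: c0; rewrite cz eqxx.
- exists (l ^+ k.+2), (q * l ^+ k); split => //; rewrite ?lP ?lQ //.
  by rewrite oppr_lt0.
- exists (q * l ^+ k), (l ^+ k.+2); split => //; rewrite ?lP ?lQ //.
  by rewrite oppr_gt0.
Qed.

Lemma part_i2 (r s : rat) : ratr r < alpha -> alpha < ratr s ->
  A (('X - r%:P) * (s%:P - 'X)) ->
  forall i, (2 <= i)%N -> exists p q', [/\ A p, A q',
     size p = i.+1 /\ size q' = i.+1, 0 < lead_coef p & lead_coef q' < 0].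
Proof.
move=> h1 h2 Aq.
have sq : size (('X - r%:P) * (s%:P - 'X)) = 3%N.
  rewrite size_mul ?lenXsubC ?lenCsubX //.
    by rewrite -size_poly_eq0 lenXsubC.
  by rewrite -size_poly_eq0 lenCsubX.
have l2 : lead_coef (s%:P - 'X : {poly rat}) = -1.
  by rewrite -opprB lead_coefN lead_coefXsubC.
have lq : lead_coef (('X - r%:P) * (s%:P - 'X)) = -1.
  by rewrite lead_coefM l2 lead_coefXsubC mul1r.
have e1 : 0 < ev ('X - r%:P) by rewrite evB evX evC; lra.
have e2 : 0 < ev (s%:P - 'X) by rewrite evB evX evC; lra.
case: (proj1 (hAB _) e1) => [A1|B1].
  apply: (part_i _ _ Aq A1) => //; first exact: lenXsubC.
  by rewrite lead_coefXsubC expr1n.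
case: (proj1 (hAB _) e2) => [A2|B2].
  apply: (part_i _ _ Aq A2) => //; first exact: lenCsubX.
  by rewrite l2 sqrrN expr1n.
by exfalso; apply: (hdisj (('X - r%:P) * (s%:P - 'X))); split => //; apply: clB.2.
Qed.

End Aux.


Theorem lemma4p4 (R : realType) (alpha : R) (H1 H2 : {poly rat} -> Prop)
  (hunion : forall p, pos_at alpha p <-> (H1 p \/ H2 p))
  (hdisj : forall p, ~ (H1 p /\ H2 p))
  (hne1 : exists p, H1 p) (hne2 : exists p, H2 p)
  (hcl1 : add_mul_closed H1) (hcl2 : add_mul_closed H2) :
  (forall i : nat, (2 <= i)%N ->
     exists H, (H = H1 \/ H = H2) /\
       exists p q, [/\ H p, H q, size p = i.+1 /\ size q = i.+1,
                       0 < lead_coef p & lead_coef q < 0]) /\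
  (forall N : nat, (1 <= N)%N ->
     (exists p, H1 p /\ size p = N.+1) /\ (exists p, H2 p /\ size p = N.+1)).
Proof.
have hunion' : forall p, pos_at alpha p <-> (H2 p \/ H1 p).
  by move=> p; rewrite hunion; tauto.
have hdisj' : forall p, ~ (H2 p /\ H1 p).
  by move=> p [a b]; apply: (hdisj p).
split.
  move=> i hi.
  have [r [s [h1 h2 _]]] := @dens R alpha 1 ltr01.
  have eq : pos_at alpha (('X - r%:P) * (s%:P - 'X)).
    rewrite /pos_at -/(ev _ alpha _) evM !evB evX !evC.
    apply: mulr_gt0; lra.
  case: (proj1 (hunion _) eq) => [Hq|Hq].
    exists H1; split; first by left.
    exact: (@part_i2 R alpha H1 H2 hunion hdisj hcl1 hcl2 r s h1 h2 Hq i hi).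
  exists H2; split; first by right.
  exact: (@part_i2 R alpha H2 H1 hunion' hdisj' hcl2 hcl1 r s h1 h2 Hq i hi).
move=> N hN; split.
  exact: (@deg_N R alpha H2 H1 hunion' hdisj' hcl2 hcl1 hne1 N hN).
exact: (@deg_N R alpha H1 H2 hunion hdisj hcl1 hcl2 hne2 N hN).
Qed.
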